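(* Let $n \in \mathbb{N}$ and work in $\mathbb{Z}_n$. Let $A_0, B_0$ be non-empty disjoint integer intervals contained in $\left(\frac{n}{8}, \frac{n}{4}\right)$ with $A_0 < B_0$. Let $B_1 \subseteq B_0$ be an integer interval, and set $A = A_0 \cup A_0^{-1}$ and $B = B_0 \cup B_0^{-1} \cup 2B_1 \cup 2B_1^{-1}$. Then $(A + B) \cap A = \emptyset$. Moreover, if $n$ is even then $\left(A + \left\{\frac{n}{2}\right\}\right) \cap A = \emptyset$, and if furthermore $\min(B_1) \geq \frac{3n}{16}$ then $\left(\left\{\frac{n}{2}\right\} + B\right) \cap A = \emptyset$.
   Context: In $\mathbb{Z}_n$ (integers under addition mod $n$), for subsets $X,Y$: $X+Y=\{x+y: x\in X, y\in Y\}$, $2X=X+X$, and $X^{-1}=\{-x: x\in X\}$ (so $2B_1^{-1}$ is $2(B_1^{-1})$, the set of negatives of elements of $2B_1$). $X<Y$ means $(x \bmod n)<(y\bmod n)$ for all $x\in X$, $y\in Y$. An integer interval in $\left(\frac n8,\frac n4\right)$ is a set of consecutive integers lying strictly between $n/8$ and $n/4$, viewed as residues mod $n$. *)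

(* Defs.v *)
(* Subsets of Z_n are {set 'Z_n} (n >= 2 assumed). *)
From HB Require Import structures.
From mathcomp Require Import all_boot all_order all_algebra.
Set Implicit Arguments. Unset Strict Implicit. Unset Printing Implicit Defensive.
Import GRing.Theory.
Local Open Scope ring_scope.

(* integer interval {a, a+1, ..., b} of residues in Z_n (used with b < n) *)
Definition zint (n a b : nat) : {set 'Z_n} :=
  [set x : 'Z_n | (a <= val x <= b)%N].

Definition sumset (n : nat) (X Y : {set 'Z_n}) : {set 'Z_n} :=
  [set x + y | x in X, y in Y].

Definition negset (n : nat) (X : {set 'Z_n}) : {set 'Z_n} :=
  [set - x | x in X].

Definition set_lt (n : nat) (X Y : {set 'Z_n}) : Prop :=
  forall x y, x \in X -> y \in Y -> (val x < val y)%N.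

(* Main.v *)
Require Import Defs.
From HB Require Import structures.
From mathcomp Require Import all_boot all_order all_algebra zify.
Import GRing.Theory.
Set Implicit Arguments. Unset Strict Implicit.
Local Open Scope ring_scope.

Lemma valZlt n (x : 'Z_n) : (1 < n)%N -> (nat_of_ord x < n)%N.
Proof. by move=> n1; apply: leq_trans (ltn_ord x) _; rewrite Zp_cast. Qed.

Lemma auxD m N a b : m = N -> (a < m)%N -> (b < m)%N ->
  ((a + b) %% m = a + b \/ (a + b) %% m + N = a + b)%N.
Proof.
move=> <- ha hb; case: (ltnP (a + b) m) => h.
  by left; rewrite modn_small.
right; have -> : (a + b = (a + b - m) + m)%N by rewrite subnK.
by rewrite modnDr modn_small ?subnK //; lia.
Qed.

Lemma auxN m N a : m = N -> (a < m)%N -> (0 < a)%N -> ((m - a) %% m + a = N)%N.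
Proof. move=> <- ha h; rewrite modn_small; lia. Qed.

Lemma valZD n (x y z : 'Z_n) : (1 < n)%N -> z = (x + y)%R ->
  (nat_of_ord z = nat_of_ord x + nat_of_ord y \/ nat_of_ord z + n = nat_of_ord x + nat_of_ord y)%N.
Proof. move=> n1 ->; exact (@auxD _ _ _ _ (Zp_cast n1) (ltn_ord x) (ltn_ord y)). Qed.

Lemma valZN n (x z : 'Z_n) : (1 < n)%N -> (0 < nat_of_ord x)%N -> z = (- x)%R -> (nat_of_ord z + nat_of_ord x = n)%N.
Proof. move=> n1 h ->; exact (@auxN _ _ _ (Zp_cast n1) (ltn_ord x) h). Qed.

Lemma valZnat n k : (1 < n)%N -> (k < n)%N -> nat_of_ord (k%:R : 'Z_n) = k.
Proof. move=> n1 kn; have := val_Zp_nat n1 k; rewrite modn_small //. Qed.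

Lemma memZ n a b (x : 'Z_n) : (x \in zint n a b) = (a <= nat_of_ord x <= b)%N.
Proof. by rewrite inE. Qed.

Lemma memA n a b (x : 'Z_n) : (1 < n)%N -> (0 < a)%N -> (b < n)%N ->
  x \in zint n a b :|: negset (zint n a b) ->
  (a <= nat_of_ord x <= b)%N \/ (a + nat_of_ord x <= n <= b + nat_of_ord x)%N.
Proof.
move=> n1 a0 bn; case/setUP => [|/imsetP[x' Hx' E]].
  by rewrite memZ; left.
rewrite memZ in Hx'; right; have hx : (0 < nat_of_ord x')%N by lia.
have := valZN n1 hx E; lia.
Qed.

Lemma memB n a1 b1 c d (y : 'Z_n) : (1 < n)%N -> (0 < a1)%N -> (4 * b1 < n)%N ->
  zint n c d \subset zint n a1 b1 ->
  y \in zint n a1 b1 :|: negset (zint n a1 b1) :|: sumset (zint n c d) (zint n c d)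
        :|: negset (sumset (zint n c d) (zint n c d)) ->
  (a1 <= nat_of_ord y <= b1)%N \/ (a1 + nat_of_ord y <= n <= b1 + nat_of_ord y)%N \/
  (exists u v : 'Z_n, u \in zint n c d /\ v \in zint n c d /\ (a1 <= nat_of_ord u <= b1)%N /\
      (a1 <= nat_of_ord v <= b1)%N /\ (nat_of_ord y = nat_of_ord u + nat_of_ord v)%N) \/
  (exists u v : 'Z_n, u \in zint n c d /\ v \in zint n c d /\ (a1 <= nat_of_ord u <= b1)%N /\
      (a1 <= nat_of_ord v <= b1)%N /\ (nat_of_ord y + nat_of_ord u + nat_of_ord v = n)%N).
Proof.
move=> n1 a0 bn sub.
have sumv : forall u v : 'Z_n, u \in zint n c d -> v \in zint n c d ->
   (a1 <= nat_of_ord u <= b1)%N /\ (a1 <= nat_of_ord v <= b1)%N /\ (nat_of_ord (u + v)%R = nat_of_ord u + nat_of_ord v)%N.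
  move=> u v hu hv; have := subsetP sub _ hu; have := subsetP sub _ hv.
  rewrite !memZ => h1 h2; have := valZD n1 (erefl (u + v)%R); lia.
case/setUP => [/setUP [/setUP [|]|]|].
- by rewrite memZ; left.
- case/imsetP => x' Hx' E; right; left; rewrite memZ in Hx'.
  have hx : (0 < nat_of_ord x')%N by lia.
  have := valZN n1 hx E; lia.
- case/imset2P => u v hu hv E; do 2 right; left; exists u, v; split; first done; split; first done.
  have := sumv u v hu hv; have := valZD n1 E; lia.
- case/imsetP => w /imset2P[u v hu hv E1] E; do 3 right; exists u, v; split; first done; split; first done.
  have h := sumv u v hu hv; have := valZD n1 E1 => h2.
  have hx : (0 < nat_of_ord w)%N by lia.
  have := valZN n1 hx E; lia.
Qed.

Theorem lemma3p2 (n a0 b0 a1 b1 c d : nat) :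
  (1 < n)%N ->
  (a0 <= b0)%N -> (a1 <= b1)%N ->
  (n < 8 * a0)%N -> (4 * b0 < n)%N ->
  (n < 8 * a1)%N -> (4 * b1 < n)%N ->
  [disjoint zint n a0 b0 & zint n a1 b1] ->
  set_lt (zint n a0 b0) (zint n a1 b1) ->
  zint n c d \subset zint n a1 b1 ->
  let A0 := zint n a0 b0 in
  let B0 := zint n a1 b1 in
  let B1 := zint n c d in
  let A := A0 :|: negset A0 in
  let B := B0 :|: negset B0 :|: sumset B1 B1 :|: negset (sumset B1 B1) in
  let half : 'Z_n := (n %/ 2)%:R in
  sumset A B :&: A = set0 /\
  (~~ odd n ->
     sumset A [set half] :&: A = set0 /\
     ((B1 != set0 /\ forall x, x \in B1 -> (3 * n <= 16 * val x)%N) ->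
        sumset [set half] B :&: A = set0)).
Proof.
move=> n1 hab0 hab1 hn0 hb0 hn1 hb1 _ hlt hsub; cbv zeta.
have a0p : (0 < a0)%N by lia.
have a1p : (0 < a1)%N by lia.
have hb0n : (b0 < n)%N by lia.
have hba : (b0 < a1)%N.
  have h1 : (b0%:R : 'Z_n) \in zint n a0 b0 by rewrite memZ valZnat //; lia.
  have h2 : (a1%:R : 'Z_n) \in zint n a1 b1 by rewrite memZ valZnat //; lia.
  have H : (nat_of_ord (b0%:R : 'Z_n) < nat_of_ord (a1%:R : 'Z_n))%N := hlt _ _ h1 h2.
  by rewrite !valZnat in H => //; lia.
split.
  apply/setP => z; rewrite in_set0 in_setI; apply/negbTE/negP.
  rewrite /sumset => /andP[/imset2P[x y hx hy E] hz].
  have := memA n1 a0p hb0n hx; have := memB n1 a1p hb1 hsub hy.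
  have := memA n1 a0p hb0n hz; have := valZD n1 E.
  move=> hE hZ hY hX.
  case: hY => [hY|[hY|[[u [v [hu [hv [h1 [h2 h3]]]]]]|[u [v [hu [hv [h1 [h2 h3]]]]]]]]]; lia.
move=> Ho.
have hk : (2 * (n %/ 2) = n)%N.
  by have := odd_double_half n; rewrite (negbTE Ho) -divn2 add0n -mul2n.
have hV : nat_of_ord ((n %/ 2)%:R : 'Z_n) = (n %/ 2)%N by rewrite valZnat //; lia.
split.
  apply/setP => z; rewrite in_set0 in_setI; apply/negbTE/negP.
  rewrite /sumset => /andP[/imset2P[x y hx /set1P hy E] hz].
  subst y.
  have := memA n1 a0p hb0n hx.
  have := memA n1 a0p hb0n hz; have := valZD n1 E.
  lia.
move=> [_ HB1].
have HB : forall x : 'Z_n, x \in zint n c d -> (3 * n <= 16 * nat_of_ord x)%N.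
  by move=> x hx; exact: HB1 x hx.
apply/setP => z; rewrite in_set0 in_setI; apply/negbTE/negP.
rewrite /sumset => /andP[/imset2P[x y /set1P hx hy E] hz].
subst x.
have := memB n1 a1p hb1 hsub hy.
have := memA n1 a0p hb0n hz; have := valZD n1 E.
move=> hE hZ hY.
case: hY => [hY|[hY|[[u [v [hu [hv [h1 [h2 h3]]]]]]|[u [v [hu [hv [h1 [h2 h3]]]]]]]]];
  try (have := HB u hu; have := HB v hv); lia.
Qed.
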